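(* Let $d \in \mathbb{N}$, $L \in \mathbb{N}$ with $L\geq 3$, $B \in \mathbb{N}$ with $B\geq 3$, $c > 0$, $q \in [1,2]$, and $s \in \mathbb{N}$ with $s \leq \min \{ d, \frac{B}{3} \}$. Then \[ \nu \cdot \frac{c^L s^{1 - \frac{2}{q}} / (2 \cdot 3^{2/q})}{M s}\, \vartheta_{M,y}^{(s)} \in \mathcal{H}_{(d,B,\dots,B,1),c}^q \quad \text{for all } M \in \mathbb{N},\ \nu \in \{ \pm 1 \},\ y \in [0,1]^d, \] where $B$ appears $L-1$ times in $(d,B,\dots,B,1)$.
   Context: Let $\varrho(x)=\max\{0,x\}$ (componentwise on vectors). For $M>0$, $\sigma\in\mathbb{R}$: $\Lambda_{M,\sigma}(t)=0$ if $t\le\sigma-\frac1M$, and $\Lambda_{M,\sigma}(t)=1-M|t-\sigma|$ if $t\ge\sigma-\frac1M$. For $y\in\mathbb{R}^d$, $s\in\{1,\dots,d\}$: $\vartheta^{(s)}_{M,y}(x)=\varrho\big(\sum_{i=1}^s\Lambda_{M,y_i}(x_i)-(s-1)\big)$, $x\in\mathbb{R}^d$. Neural networks: for $(N_0,\dots,N_L)$ and $\Phi=((W^i,b^i))_{i=1}^L$, $W^i\in\mathbb{R}^{N_i\times N_{i-1}}$, $b^i\in\mathbb{R}^{N_i}$, the realization is $R(\Phi)(x)=x^L$ with $x^0=x$, $x^i=\varrho(W^ix^{i-1}+b^i)$ for $1\le i\le L-1$, $x^L=W^Lx^{L-1}+b^L$. With entrywise $\ell^q$ norms and $\|\Phi\|_{\ell^q}=\max_i\max\{\|W^i\|_{\ell^q},\|b^i\|_{\ell^q}\}$,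 set $\mathcal{H}^q_{(N_0,\dots,N_L),c}=\{R(\Phi):\|\Phi\|_{\ell^q}\le c\}$. *)

(* Defs.v *)
From HB Require Import structures.
From mathcomp Require Import all_boot all_order all_algebra.
From mathcomp Require Import all_classical all_reals.
From mathcomp Require Import exp.
Set Implicit Arguments. Unset Strict Implicit. Unset Printing Implicit Defensive.
Import Order.TTheory GRing.Theory Num.Theory.
Local Open Scope ring_scope.

Section Defs.
Variable R : realType.

Definition relu (x : R) : R := Num.max 0 x.
Definition relu_vec n (v : 'cV[R]_n) : 'cV[R]_n := map_mx relu v.

Definition Lambda (M sigma t : R) : R :=
  if t <= sigma - M^-1 then 0 else 1 - M * `|t - sigma|.

Definition theta d (s : nat) (M : R) (y x : 'cV[R]_d) : R :=
  relu (\sum_(i < d | (i < s)%N) Lambda M (y i 0) (x i 0) - (s%:R - 1)).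

Definition lqnorm (q : R) m n (A : 'M[R]_(m, n)) : R :=
  (\sum_(i < m) \sum_(j < n) `|A i j| `^ q) `^ q^-1.

(* A network with input width n0, hidden widths hs = (N_1,...,N_{L-1}),
   output width m: the list of pairs (W^i, b^i), i = 1..L. *)
Fixpoint net (n0 : nat) (hs : seq nat) (m : nat) : Type :=
  match hs with
  | [::] => ('M[R]_(m, n0) * 'cV[R]_m)%type
  | n1 :: hs' => (('M[R]_(n1, n0) * 'cV[R]_n1) * net n1 hs' m)%type
  end.

Fixpoint realize (n0 : nat) (hs : seq nat) (m : nat) :
    net n0 hs m -> 'cV[R]_n0 -> 'cV[R]_m :=
  match hs with
  | [::] => fun Phi x => Phi.1 *m x + Phi.2
  | n1 :: hs' => fun Phi x =>
      realize Phi.2 (relu_vec (Phi.1.1 *m x + Phi.1.2))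
  end.

Fixpoint netnorm (q : R) (n0 : nat) (hs : seq nat) (m : nat) :
    net n0 hs m -> R :=
  match hs with
  | [::] => fun Phi => Num.max (lqnorm q Phi.1) (lqnorm q Phi.2)
  | n1 :: hs' => fun Phi =>
      Num.max (Num.max (lqnorm q Phi.1.1) (lqnorm q Phi.1.2)) (netnorm q Phi.2)
  end.

Definition H (q : R) (n0 : nat) (hs : seq nat) (m : nat) (c : R)
  : set ('cV[R]_n0 -> 'cV[R]_m) :=
  [set f | exists Phi : net n0 hs m, netnorm q Phi <= c /\ f = realize Phi].

End Defs.

(* Main.v *)
Require Import Defs.
From HB Require Import structures.
From mathcomp Require Import all_boot all_order all_algebra.
From mathcomp Require Import all_classical all_reals.
From mathcomp Require Import exp.
From mathcomp Require Import ring lra zify.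
Import Order.TTheory GRing.Theory Num.Theory.
Local Open Scope ring_scope.

Lemma relu_ge0 (R : realType) (u : R) : 0 <= relu u.
Proof. by rewrite /relu le_max lexx. Qed.

Lemma relu_pos (R : realType) (u : R) : 0 <= u -> relu u = u.
Proof. by move=> h; rewrite /relu; apply/max_idPr. Qed.

Lemma relu_neg (R : realType) (u : R) : u <= 0 -> relu u = 0.
Proof. by move=> h; rewrite /relu; apply/max_idPl. Qed.

Lemma relu_scale (R : realType) (a u : R) : 0 <= a -> relu (a * u) = a * relu u.
Proof.
move=> ha; have [hu|hu] := lerP 0 u.
  by rewrite !relu_pos // mulr_ge0.
rewrite !relu_neg ?mulr0 //; first exact: ltW.
by rewrite mulr_ge0_le0 // ltW.
Qed.

Lemma Lambda_relu (R : realType) (M sg t : R) : 0 < M ->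
  Lambda M sg t = M * relu (t - sg + M^-1) - 2 * M * relu (t - sg).
Proof.
move=> hM; have hMi : 0 < M^-1 by rewrite invr_gt0.
have MMi : M * M^-1 = 1 by rewrite mulfV // gt_eqF.
rewrite /Lambda; case: ifP => h1.
  rewrite !relu_neg ?mulr0 ?subr0 //; lra.
move/negbT: h1; rewrite -ltNge => h1.
rewrite (@relu_pos R (t - sg + M^-1)); last lra.
have [h2|h2] := lerP (t - sg) 0.
  rewrite relu_neg // ler0_norm //. 
  rewrite mulrDr MMi; lra.
rewrite relu_pos ?gtr0_norm ?mulrDr ?MMi; lra.
Qed.

Lemma lqnorm_le (R : realType) (q c : R) m n (A : 'M[R]_(m, n)) :
  0 < q -> 0 <= c ->
  \sum_(i < m) \sum_(j < n) `|A i j| `^ q <= c `^ q -> lqnorm q A <= c.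
Proof.
move=> hq hc hS; rewrite /lqnorm.
have -> : c = (c `^ q) `^ q^-1 by rewrite -powRrM mulfV ?gt_eqF // powRr1.
apply: ge0_ler_powR => //; first by rewrite invr_ge0 ltW.
  by rewrite nnegrE; apply: sumr_ge0 => i _; apply: sumr_ge0 => j _; apply: powR_ge0.
by rewrite nnegrE powR_ge0.
Qed.

Lemma sum_bound (R : realType) m n (f : 'I_m -> R) (e : R) : (n <= m)%N ->
  (forall j, f j <= e) -> (forall j : 'I_m, (n <= j)%N -> f j = 0) ->
  \sum_(j < m) f j <= e *+ n.
Proof.
move=> hnm hle hz.
apply: (@le_trans _ _ (\sum_(j < m) (if (j < n)%N then e else 0))).
  apply: ler_sum => j _; case: ifP => // /negbT; rewrite -leqNgt => h.
  by rewrite hz.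
by rewrite -big_mkcond /= big_ord_narrow // sumr_const card_ord.
Qed.

Lemma single_bound (R : realType) d (k : nat) (g : 'I_d -> R) (e : R) : 0 <= e ->
  (forall i : 'I_d, (i : nat) != k -> g i = 0) -> (forall i, g i <= e) ->
  \sum_(i < d) g i <= e.
Proof.
move=> he hz hle; case: (ltnP k d) => hk.
  rewrite (bigD1 (Ordinal hk)) //= big1 ?addr0.
    exact: hle.
  move=> i hi; apply: hz.
  by apply: contraNneq hi => h; apply/eqP/val_inj.
by rewrite big1 // => i _; apply: hz; rewrite neq_ltn (leq_trans (ltn_ord i) hk).
Qed.

Lemma powq_le (R : realType) (q x e : R) : 0 <= q -> `|x| <= e -> `|x| `^ q <= e `^ q.
Proof.
move=> hq hx; apply: ge0_ler_powR => //; rewrite nnegrE //.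
exact: le_trans hx.
Qed.

Set Implicit Arguments.

Definition Wp (R : realType) B (a : R) : 'M[R]_(B, B) :=
  \matrix_(j, i) (if ((j : nat) == 0%N) && ((i : nat) == 0%N) then a else 0).
Definition Wo (R : realType) B (a : R) : 'M[R]_(1, B) :=
  \matrix_(j, i) (if ((i : nat) == 0%N) then a else 0).

Arguments Wo {R} B a.
Arguments Wp {R} B a.

Fixpoint pt (R : realType) B (c a : R) (k : nat) : net R B (nseq k B) 1 :=
  match k return net R B (nseq k B) 1 with
  | 0%N => (Wo B a, 0)
  | k'.+1 => ((Wp B c, 0), pt R B c a k')
  end.
Arguments pt {R} B c a k.


Lemma pt_spec (R : realType) B (c a : R) k (v : 'cV[R]_B.+1) :
  0 <= c -> (forall j, 0 <= v j 0) ->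
  realize (pt B.+1 c a k) v = const_mx (a * c ^+ k * v ord0 0).
Proof.
move=> hc; elim: k v => [|k IH] v hv /=.
  apply/matrixP => i j; rewrite (ord1 j) !mxE big_ord_recl big1 ?mxE /= ?addr0 ?expr0 ?mulr1 //.
  by move=> l _; rewrite mxE /=; rewrite mul0r.
rewrite IH; last by move=> j; rewrite mxE relu_ge0.
congr const_mx; rewrite mxE !mxE big_ord_recl big1 ?mxE /= ?addr0.
  by rewrite relu_pos ?mulr_ge0 // exprS; ring.
by move=> l _; rewrite mxE /= mul0r.
Qed.

Lemma lq0 (R : realType) (q c : R) m n : 0 < q -> 0 <= c -> lqnorm q (0 : 'M[R]_(m, n)) <= c.
Proof.
move=> hq hc; apply: lqnorm_le => //.
rewrite big1 ?powR_ge0 // => i _; rewrite big1 // => j _.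
by rewrite mxE normr0 powR0 // gt_eqF.
Qed.

Lemma pt_norm (R : realType) B (q c a : R) k : 0 < q -> 0 <= c -> `|a| <= c ->
  netnorm q (pt B.+1 c a k) <= c.
Proof.
move=> hq hc ha; elim: k => [|k IH] /=.
  rewrite ge_max lq0 // andbT; apply: lqnorm_le => //.
  rewrite -[c `^ q]mulr1n; apply: sum_bound => // j.
    rewrite -[c `^ q]mulr1n; apply: sum_bound => // i.
      by rewrite mxE; case: ifP => _; apply: powq_le; rewrite ?normr0 ?(ltW hq).
    by rewrite mxE; case: ifP => [/eqP -> //|_]; rewrite normr0 powR0 // gt_eqF.
  by case: j => -[].
rewrite !ge_max IH lq0 // andbT andbT; apply: lqnorm_le => //.
rewrite -[c `^ q]mulr1n; apply: sum_bound => // j.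
  rewrite -[c `^ q]mulr1n; apply: sum_bound => // i.
    by rewrite mxE; case: ifP => _; apply: powq_le; rewrite ?normr0 ?ger0_norm ?(ltW hq).
  rewrite mxE; case: ifP => [/andP[_ /eqP -> //]|_]; rewrite normr0 powR0 // gt_eqF //.
move=> hj; apply: big1 => i _; rewrite mxE.
case: ifP => [/andP[/eqP h _]|_]; first by rewrite h in hj.
by rewrite normr0 powR0 // gt_eqF.
Qed.

Unset Implicit Arguments.


Definition ext (R : realType) d (v : 'cV[R]_d) (k : nat) : R :=
  oapp (fun i : 'I_d => v i 0) 0 (insub k).
Arguments ext {R d} v k.

Lemma ext_val (R : realType) d (v : 'cV[R]_d) (i : 'I_d) : ext v i = v i 0.
Proof. by rewrite /ext valK. Qed.

Lemma ext_bnd (R : realType) d (v : 'cV[R]_d) k :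
  (forall i, 0 <= v i 0 <= 1) -> 0 <= ext v k <= 1.
Proof. by move=> h; rewrite /ext; case: insub => [i|] //=; rewrite lexx ler01. Qed.

Lemma shift_sum (R : realType) a n (F : nat -> R) :
  \sum_(a <= i < a + n) F i = \sum_(0 <= i < n) F (i + a)%N.
Proof. by rewrite -{1}[a]add0n big_addn addKn. Qed.

Lemma pq0 (R : realType) (q : R) : 0 < q -> `|0 : R| `^ q = 0.
Proof. by move=> hq; rewrite normr0 powR0 // gt_eqF. Qed.

Lemma absM_le (R : realType) (a u : R) : 0 <= a -> `|u| <= 1 -> `|a * u| <= a.
Proof. by move=> ha hu; rewrite normrM ger0_norm // ler_piMr. Qed.


Lemma natf1 (s k : nat) : (3 * s <= k)%N ->
  [/\ (k < s)%N = false, (k < 2 * s)%N = false & (k < 3 * s)%N = false].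
Proof. move=> h; split; lia. Qed.

Lemma natf2 (s i : nat) : (i < s)%N ->
  [/\ (i < 2 * s)%N, (i + s < s)%N = false & (i + s < 2 * s)%N].
Proof. move=> h; split; lia. Qed.
Lemma natf3 (s i : nat) : (i < s)%N ->
  [/\ (i + (s + s) < s)%N = false, (i + (s + s) < 2 * s)%N = false &
     (i + (s + s) < 3 * s)%N].
Proof. move=> h; split; lia. Qed.

Theorem lemma2p5 (R : realType) (d L B : nat) (c q : R) (s : nat)
  (hL : (3 <= L)%N) (hB : (3 <= B)%N) (hc : 0 < c)
  (hq1 : 1 <= q) (hq2 : q <= 2)
  (hs1 : (1 <= s)%N) (hsd : (s <= d)%N) (hsB : (3 * s <= B)%N) :
  forall (M : nat) (nu : R) (y : 'cV[R]_d),
    (0 < M)%N -> (nu = 1 \/ nu = -1) -> (forall i, 0 <= y i 0 <= 1) ->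
    @H R q d (nseq L.-1 B) 1 c
      (fun x : 'cV[R]_d =>
         const_mx (nu *
           ((c ^+ L * (s%:R `^ (1 - 2 / q)) / (2 * 3 `^ (2 / q)))
              / (M%:R * s%:R))
           * theta s M%:R y x)).
Proof.
move=> M nu y hM hnu hy.
case: B hB hsB => [|B] // hB hsB.
case: L hL => [|[|[|L]]] // hL.
have hq : 0 < q by lra.
set Mr : R := M%:R; set sr : R := s%:R.
have hMr : 1 <= Mr by rewrite /Mr ler1n.
have hsr : 1 <= sr by rewrite /sr ler1n.
pose r := (3 * sr) `^ q^-1.
have hr : 0 < r by apply: powR_gt0; lra.
pose al := c / r.
have hal : 0 < al by rewrite divr_gt0.
pose a := al / 2.
pose beta := c ^+ 2 * (sr `^ (1 - 2 / q)) / (2 * 3 `^ (2 / q)) / (Mr * sr).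
have F1 : c `^ q = al `^ q *+ (3 * s).
  rewrite -mulr_natr natrM -/sr.
  have rq : r `^ q = 3 * sr by rewrite /r -powRrM mulVf ?gt_eqF // powRr1 //; lra.
  by rewrite -rq -powRM ?ltW // /al divfK ?gt_eqF.
have F2 : a * al / Mr = beta.
  have e : 2 / q = q^-1 + q^-1 by field; rewrite gt_eqF.
  have rr : r * r = 3 `^ (2/q) * sr `^ (2/q).
    have h3s : 0 < 3 * sr by lra.
    rewrite /r -powRD ?(gt_eqF h3s) ?implybT //.
    by rewrite -e powRM //; lra.
  have ss : sr `^ (1 - 2/q) = sr / sr `^ (2/q).
    have h0s : 0 < sr by lra.
    by rewrite powRB ?powRr1 ?(gt_eqF h0s) ?implybT //; lra.
  have h3 : 0 < 3 `^ (2/q) :> R by apply: powR_gt0.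
  have hs2 : 0 < sr `^ (2/q) by apply: powR_gt0; lra.
  have -> : a * al / Mr = c ^+ 2 / (2 * (r * r) * Mr).
    rewrite /a /al; field; rewrite ?gt_eqF //; lra.
  rewrite rr /beta ss; field.
  by rewrite !gt_eqF //; lra.
pose gn (k : nat) : R := if (k < s)%N then a else if (k < 2 * s)%N then - (2 * a)
   else if (k < 3 * s)%N then - a else 0.
pose cst : R := (sr - 1) / (sr * Mr).
pose b1n (k : nat) : R := if (k < s)%N then al * (Mr^-1 - ext y k)
   else if (k < 2 * s)%N then - (al * ext y (k - s)%N)
   else if (k < 3 * s)%N then al * cst else 0.
pose W1 : 'M[R]_(B.+1, d) := \matrix_(j, i) (if ((j < 2 * s)%N && ((i : nat) == (j %% s)%N)) then al else 0).
pose b1 : 'cV[R]_B.+1 := \col_j b1n j.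
pose W2 : 'M[R]_(B.+1, B.+1) := \matrix_(j, k) (if (j : nat) == 0%N then gn k else 0).
exists ((W1, b1), ((W2, 0), pt B.+1 c (nu * c) L)); split.
  have hq0 : 0 <= q by lra.
  have hMi : 0 < Mr^-1 <= 1 by rewrite invr_gt0 invf_le1 //; lra.
  have hW1 : lqnorm q W1 <= c.
    apply: lqnorm_le => //; first exact: ltW.
    rewrite F1; apply: sum_bound => // j.
      apply: (@single_bound _ _ (j %% s)%N); first exact: powR_ge0.
        by move=> i hi; rewrite mxE (negbTE hi) andbF pq0.
      move=> i; rewrite mxE; case: ifP => _; last by rewrite pq0 // powR_ge0.
      by apply: powq_le => //; rewrite ger0_norm // ltW.
    move=> hj; apply: big1 => i _; rewrite mxE.
    have e2 : (j < 2 * s)%N = false.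
      by apply/negbTE; rewrite -leqNgt; apply: leq_trans _ hj; rewrite leq_mul2r orbT.
    by rewrite e2 pq0.
  have hb1 : lqnorm q b1 <= c.
    apply: lqnorm_le => //; first exact: ltW.
    rewrite F1; apply: sum_bound => // j.
      rewrite big_ord1 mxE; apply: powq_le => //.
      rewrite /b1n; case: ifP => _.
        apply: absM_le; first exact: ltW.
        by have := @ext_bnd _ _ y j hy; rewrite ler_norml; lra.
      case: ifP => _.
        rewrite normrN; apply: absM_le; first exact: ltW.
        by have := @ext_bnd _ _ y (j - s)%N hy; rewrite ler_norml; lra.
      case: ifP => _; last by rewrite normr0 ltW.
      apply: absM_le; first exact: ltW.
      have hsM : 0 < sr * Mr by apply: mulr_gt0; lra.
      have hp : sr <= sr * Mr by rewrite ler_peMr //; lra.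
      rewrite ler_norml /cst ler_pdivrMr // ler_pdivlMr //; apply/andP; split; lra.
    move=> hj; rewrite big_ord1 mxE /b1n.
    have e1 : (j < s)%N = false by apply/negbTE; rewrite -leqNgt; apply: leq_trans _ hj; exact: leq_pmull.
    have e2 : (j < 2 * s)%N = false by apply/negbTE; rewrite -leqNgt; apply: leq_trans _ hj; rewrite leq_mul2r orbT.
    have e3 : (j < 3 * s)%N = false by apply/negbTE; rewrite -leqNgt.
    by rewrite e1 e2 e3 pq0.
  have hW2 : lqnorm q W2 <= c.
    apply: lqnorm_le => //; first exact: ltW.
    rewrite F1 -[X in _ <= X]mulr1n; apply: sum_bound => // j.
      apply: sum_bound => // k.
        rewrite mxE; case: ifP => _; last by rewrite pq0 // powR_ge0.
        apply: powq_le => //; rewrite /gn /a.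
        case: ifP => _; first by rewrite ger0_norm ?divr_ge0 ?(ltW hal) //; lra.
        case: ifP => _; first by rewrite normrN ger0_norm; lra.
        case: ifP => _; first by rewrite normrN ger0_norm ?divr_ge0 ?(ltW hal) //; lra.
        by rewrite normr0 ltW.
      move=> hk; rewrite mxE /gn; case: ifP => _; last by rewrite pq0.
      have e1 : (k < s)%N = false by apply/negbTE; rewrite -leqNgt; apply: leq_trans _ hk; exact: leq_pmull.
      have e2 : (k < 2 * s)%N = false by apply/negbTE; rewrite -leqNgt; apply: leq_trans _ hk; rewrite leq_mul2r orbT.
      have e3 : (k < 3 * s)%N = false by apply/negbTE; rewrite -leqNgt.
      by rewrite e1 e2 e3 pq0.
    move=> hj; apply: big1 => k _; rewrite mxE.
    have e0 : ((j : nat) == 0%N) = false by apply/negbTE; rewrite -lt0n.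
    by rewrite e0 pq0.
  have hnc : `|nu * c| <= c by case: hnu => ->; rewrite ?mul1r ?mulN1r ?normrN ger0_norm // ltW.
  change (Num.max (Num.max (lqnorm q W1) (lqnorm q b1)) (Num.max (Num.max (lqnorm q W2) (lqnorm q (0 : 'cV[R]_B.+1))) (netnorm q (pt B.+1 c (nu * c) L))) <= c).
  have h0 := @lq0 R q c B.+1 1 hq (ltW hc).
  have hp := @pt_norm R B q c (nu * c) L hq (ltW hc) hnc.
  rewrite !ge_max.
  apply/andP; split; apply/andP; split; [exact: hW1 | exact: hb1 | | exact: hp].
  by apply/andP; split; [exact: hW2 | exact: h0].
apply: funext => x.
pose z1n (k : nat) : R := (if (k < 2 * s)%N then al * ext x (k %% s)%N else 0) + b1n k.
have hz1 : forall j : 'I_B.+1, (W1 *m x + b1) j 0 = z1n j.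
  move=> j; rewrite mxE [b1 j 0]mxE /z1n; congr (_ + _).
  rewrite mxE; under eq_bigr => i _ do rewrite mxE.
  case: ifP => hj.
    have hk : ((j %% s) < d)%N by apply: leq_trans hsd; rewrite ltn_pmod.
    rewrite (bigD1 (Ordinal hk)) //= eqxx big1 ?addr0.
      by rewrite -(@ext_val _ _ x (Ordinal hk)).
    move=> i hi; rewrite (_ : (i : nat) == (j %% s)%N = false) ?mul0r //.
    by apply/negbTE; apply: contra hi => /eqP h; apply/eqP/val_inj.
  by rewrite big1 // => i _; rewrite mul0r.

rewrite [RHS]/=.
rewrite (@pt_spec R B c (nu * c) L); last 2 first.
- exact: ltW.
- by move=> j; rewrite mxE relu_ge0.
congr const_mx.
rewrite mxE addr0 mxE.
under eq_bigr => k _ do rewrite [W2 _ _]mxE /= [relu_vec _ k 0]mxE hz1.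
have e2 : (2 * s = s + s)%N by rewrite mul2n addnn.
have e3 : (3 * s = s + s + s)%N by rewrite (mulSn 2) e2 addnC.
have hMr0 : 0 < Mr by lra.
have hcst : 0 <= cst by rewrite /cst divr_ge0 //; [lra | apply: mulr_ge0; lra].
pose F (k : nat) := gn k * relu (z1n k).
have hS : \sum_(k < B.+1) gn k * relu (z1n k) =
    beta * (\sum_(i < d | (i < s)%N) Lambda Mr (y i 0) (x i 0) - (sr - 1)).
  have -> : \sum_(k < B.+1) gn k * relu (z1n k) = \sum_(0 <= k < B.+1) F k.
    by rewrite big_mkord.
  rewrite (big_cat_nat (leq0n (3 * s)) hsB) /=.
  rewrite [X in _ + X]big_nat_cond [X in _ + X]big1 ?addr0; last first.
    move=> k /andP[/andP[hk _] _]; rewrite /F /gn.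
    have [f1 f2 f3] := @natf1 s k hk.
    by rewrite f1 f2 f3 mul0r.
  rewrite e3 (big_cat_nat (leq0n (s + s)) (leq_addr s (s + s))) /=.
  rewrite (big_cat_nat (leq0n s) (leq_addr s s)) /=.
  rewrite (@shift_sum R s s F) (@shift_sum R (s + s) s F) -!big_split /=.
  rewrite (eq_big_nat _ _ (F2 := fun i => (a * al / Mr) * Lambda Mr (ext y i) (ext x i) - a * al * cst)); last first.
    move=> i /andP[_ hi]; rewrite /F /gn /z1n /b1n.
    have [h2 h3 h4] := @natf2 s i hi.
    have [h7 h8 h9] := @natf3 s i hi.
    have h5 : ((i + s) %% s = i)%N by rewrite modnDr modn_small.
    have h6 : (i + s - s = i)%N by rewrite addnK.
    have h10 : (i %% s = i)%N by rewrite modn_small.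
    rewrite hi h2 h3 h4 h5 h6 h7 h8 h9 h10 (@Lambda_relu R Mr _ _ hMr0).
    rewrite (_ : al * ext x i + al * (Mr^-1 - ext y i) = al * (ext x i - ext y i + Mr^-1)); last by ring.
    rewrite (_ : al * ext x i + - (al * ext y i) = al * (ext x i - ext y i)); last by ring.
    rewrite !relu_scale ?(ltW hal) // add0r (@relu_pos R (al * cst) (mulr_ge0 (ltW hal) hcst)).
    by field; rewrite gt_eqF.
  rewrite /= sumrB -mulr_sumr sumr_const_nat subn0.
  have hT : \sum_(i < d | (i < s)%N) Lambda Mr (y i 0) (x i 0) = \sum_(0 <= i < s) Lambda Mr (ext y i) (ext x i).
    rewrite (big_nat_widen _ _ _ _ _ hsd) big_mkord.
    by apply: eq_bigr => i _; rewrite !ext_val.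
  rewrite hT -F2 /cst mulr_natr -/sr; field.
  by rewrite !gt_eqF //; lra.
have hbeta : 0 <= beta.
  rewrite -F2 /a; apply: divr_ge0; last exact: ltW.
  by apply: mulr_ge0; [apply: divr_ge0; [exact: ltW|] | exact: ltW].
rewrite hS relu_scale // /theta -/sr /beta.
have h3 : 0 < 3 `^ (2/q) :> R by apply: powR_gt0.
rewrite !exprS; field.
by rewrite !gt_eqF //; lra.
Qed.
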